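(* For every unweighted congestion game $\mathcal{G}$ with quadratic latency functions, $\mathrm{PoS}(\mathcal{G})\le 2.362$.
   Context: A weighted congestion game consists of a finite set $[n]=\{1,\dots,n\}$ of players, a finite set $E$ of resources, for each player $i$ a weight $w_i>0$ and a nonempty finite strategy set $\Sigma_i\subseteq 2^E$, and for each resource $e$ a latency function $\ell_e:\mathbb{R}_{\ge 0}\to\mathbb{R}_{\ge 0}$. It is unweighted if $w_i=1$ for all $i$. Quadratic latency functions means $\ell_e(x)=\sum_{j=0}^{2}\alpha_{e,j}x^j$ with all $\alpha_{e,j}\ge 0$. For a strategy profile $S=(s_1,\dots,s_n)$, the congestion of $e$ is $L_e(S)=\sum_{i:\,e\in s_i}w_i$, the cost of player $i$ is $c_i(S)=\sum_{e\in s_i}\ell_e(L_e(S))$, and $\mathrm{SUM}(S)=\sum_i c_i(S)$; $S^*$ minimizes $\mathrm{SUM}$. A pure Nash equilibrium (PNE) is a profile $S$ with $c_i(S)\le c_i(S_{-i}\diamond t)$ for all $i$ and $t\in\Sigma_i$, where $(S_{-i}\diamond t)$ replaces $s_i$ by $t$. $\mathrm{PoS}(\mathcal{G})=\min_{S\ \mathrm{PNE}}\mathrm{SUM}(S)/\mathrm{SUM}(S^* )$. *)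

(* Defs.v *)
From HB Require Import structures.
From mathcomp Require Import all_boot all_order all_algebra.
Set Implicit Arguments. Unset Strict Implicit. Unset Printing Implicit Defensive.
Import Order.TTheory GRing.Theory Num.Theory.
Local Open Scope ring_scope.

Section Congestion.
Variables (R : realFieldType) (n : nat) (E : finType).
Variable Sigma : 'I_n -> {set {set E}}.
Variables (a0 a1 a2 : E -> R).

Definition latency (e : E) (x : R) : R := a0 e + a1 e * x + a2 e * x ^+ 2.

Definition profile := {ffun 'I_n -> {set E}}.

Definition valid_profile (S : profile) : Prop := forall i, S i \in Sigma i.

Definition load (S : profile) (e : E) : R := (#|[set i | e \in S i]|)%:R.

Definition cost (S : profile) (i : 'I_n) : R :=
  \sum_(e in S i) latency e (load S e).

Definition SUM (S : profile) : R := \sum_(i < n) cost S i.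

Definition deviate (S : profile) (i : 'I_n) (t : {set E}) : profile :=
  [ffun j => if j == i then t else S j].

Definition is_PNE (S : profile) : Prop :=
  valid_profile S /\
  forall (i : 'I_n) (t : {set E}), t \in Sigma i -> cost S i <= cost (deviate S i t) i.

End Congestion.

(* Main.v *)
Require Import Defs.
From HB Require Import structures.
From mathcomp Require Import all_boot all_order all_algebra.
From mathcomp Require Import ring lra.
Import Order.TTheory GRing.Theory Num.Theory.
Set Implicit Arguments. Unset Strict Implicit.
Local Open Scope ring_scope.
Lemma c2_01 (R : realFieldType) (b : R) : 0 <= b ->
  2724*(b+1) + 1908*((b+1)*(b+2)*(2*b+3)) - 14172*(b+1)^+3 <= 0.
Proof. move=> hb. have h3 := mulr_ge0 (mulr_ge0 hb hb) hb. nra. Qed.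
Lemma c2_10 (R : realFieldType) (a : R) : 0 <= a ->
  3276*(a+1)^+3 - 1908*((a+1)*(a+2)*(2*a+3)) <= 0.
Proof. move=> ha. have h3 := mulr_ge0 (mulr_ge0 ha ha) ha. nra. Qed.
Lemma c1_01 (R : realFieldType) (b : R) : 0 <= b ->
  2724*(b+1) + 5724*((b+1)*(b+2)) - 14172*(b+1)^+2 <= 0.
Proof. move=> hb. nra. Qed.
Lemma c1_10 (R : realFieldType) (a : R) : 0 <= a ->
  3276*(a+1)^+2 - 5724*((a+1)*(a+2)) <= 0.
Proof. move=> ha. nra. Qed.
Lemma c1_11 (R : realFieldType) (a b : R) : 0 <= a -> 0 <= b ->
  3276*(a+1)^+2 + 2724*(b+1)*(a+2) + 5724*((b+1)*(b+2) - (a+1)*(a+2)) - 14172*(b+1)^+2 <= 0.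
Proof. move=> ha hb. nra. Qed.
Lemma v2_11 (R : realFieldType) (a b : R) : 0 <= a -> 0 <= b ->
  3276*(a+1)^+3 + 2724 * (b+1)*(a+2)^+2 + 1908*((b+1)*(b+2)*(2*b+3) - (a+1)*(a+2)*(2*a+3)) - 14172 * (b+1)^+3 <= 0.
Proof. move=> ha hb.
have h1 : 0 <= a * (a - 3363/1000 * b)^+2 by apply: mulr_ge0 => //; apply: sqr_ge0.
have h2 : 0 <= b * (a - 3363/1000 * b)^+2 by apply: mulr_ge0 => //; apply: sqr_ge0.
have h3 := mulr_ge0 (mulr_ge0 ha hb) hb.
have h4 := mulr_ge0 (mulr_ge0 hb hb) hb.
nra.
Qed.
Lemma natS (R : realFieldType) (k : nat) : (k.+1)%:R = k%:R + 1 :> R.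
Proof. by rewrite mulrSr. Qed.

Lemma eqle (R : realFieldType) (u v : R) : u = v -> u <= v.
Proof. by move->. Qed.

Lemma key2 (R : realFieldType) (x y : nat) :
  3276*(x%:R : R)^+3 + 2724*y%:R*(x%:R+1)^+2 + 1908*(y%:R*(y%:R+1)*(2*y%:R+1) - x%:R*(x%:R+1)*(2*x%:R+1))
   - 14172*(y%:R)^+3 <= 0.
Proof.
case: x => [|x]; case: y => [|y]; rewrite ?(natS R x) ?(natS R y) ?mulr0n.
- apply: eqle; ring.
- apply: (le_trans _ (c2_01 (ler0n R y))); apply: eqle; ring.
- apply: (le_trans _ (c2_10 (ler0n R x))); apply: eqle; ring.
- apply: (le_trans _ (v2_11 (ler0n R x) (ler0n R y))); apply: eqle; ring.
Qed.

Lemma key1 (R : realFieldType) (x y : nat) :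
  3276*(x%:R : R)^+2 + 2724*y%:R*(x%:R+1) + 5724*(y%:R*(y%:R+1) - x%:R*(x%:R+1)) - 14172*(y%:R)^+2 <= 0.
Proof.
case: x => [|x]; case: y => [|y]; rewrite ?(natS R x) ?(natS R y) ?mulr0n.
- apply: eqle; ring.
- apply: (le_trans _ (c1_01 (ler0n R y))); apply: eqle; ring.
- apply: (le_trans _ (c1_10 (ler0n R x))); apply: eqle; ring.
- apply: (le_trans _ (c1_11 (ler0n R x) (ler0n R y))); apply: eqle; ring.
Qed.

Section Game.
Variables (R : realFieldType) (n : nat) (E : finType).
Variable Sigma : 'I_n -> {set {set E}}.
Variables (a0 a1 a2 : E -> R).
Hypothesis ha : forall e, 0 <= a0 e /\ 0 <= a1 e /\ 0 <= a2 e.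

Local Notation lat := (latency a0 a1 a2).

Definition Pot (e : E) (m : nat) : R := \sum_(k < m) lat e (k.+1)%:R.

Lemma PotS e m : Pot e m.+1 = Pot e m + lat e (m.+1)%:R.
Proof. by rewrite /Pot big_ord_recr. Qed.

Lemma Pot_closed e m : 6 * Pot e m =
  6 * a0 e * m%:R + 3 * a1 e * (m%:R * (m%:R + 1))
  + a2 e * (m%:R * (m%:R + 1) * (2 * m%:R + 1)).
Proof.
elim: m => [|m IH]; first by rewrite /Pot big_ord0 !mulr0n; ring.
rewrite PotS mulrDr IH /latency (natS R m); ring.
Qed.

Lemma lat_mono e (u v : R) : 0 <= u -> u <= v -> lat e u <= lat e v.
Proof.
move=> hu huv; have [h0 [h1 h2]] := ha e; rewrite /latency.
have hv : 0 <= v by apply: le_trans huv.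
have k1 : a1 e * u <= a1 e * v by apply: ler_wpM2l.
have k2 : u ^+ 2 <= v ^+ 2 by rewrite ler_sqr.
have k3 : a2 e * u ^+ 2 <= a2 e * v ^+ 2 by apply: ler_wpM2l.
lra.
Qed.

Lemma resource e (x y : nat) :
  3276 * (x%:R * lat e x%:R) + 2724 * (y%:R * lat e (x%:R + 1))
  + 1908 * (6 * Pot e y - 6 * Pot e x) <= 14172 * (y%:R * lat e y%:R).
Proof.
have [h0 [h1 h2]] := ha e.
rewrite !Pot_closed /latency.
have k1 := mulr_ge0_le0 h1 (key1 R x y).
have k2 := mulr_ge0_le0 h2 (key2 R x y).
have k0 := mulr_ge0 h0 (ler0n R x).
rewrite -subr_ge0.
set X := (x%:R : R) in k0 k1 k2 *. set Y := (y%:R : R) in k1 k2 *.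
have -> : 14172 * (Y * (a0 e + a1 e * Y + a2 e * Y ^+ 2)) -
  (3276 * (X * (a0 e + a1 e * X + a2 e * X ^+ 2)) +
   2724 * (Y * (a0 e + a1 e * (X + 1) + a2 e * (X + 1) ^+ 2)) +
   1908 *
   (6 * a0 e * Y + 3 * a1 e * (Y * (Y + 1)) +
    a2 e * (Y * (Y + 1) * (2 * Y + 1)) -
    (6 * a0 e * X + 3 * a1 e * (X * (X + 1)) +
     a2 e * (X * (X + 1) * (2 * X + 1))))) =
  8172 * (a0 e * X) + a1 e * - (3276 * X ^+ 2 + 2724 * Y * (X + 1) + 5724 * (Y * (Y + 1) - X * (X + 1)) - 14172 * Y ^+ 2)
  + a2 e * - (3276 * X ^+ 3 + 2724 * Y * (X + 1) ^+ 2 +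
    1908 * (Y * (Y + 1) * (2 * Y + 1) - X * (X + 1) * (2 * X + 1)) - 14172 * Y ^+ 3) by ring.
apply: addr_ge0; [apply: addr_ge0|].
- by apply: mulr_ge0.
- by rewrite mulrN oppr_ge0.
- by rewrite mulrN oppr_ge0.
Qed.

End Game.
Section Game2.
Variables (R : realFieldType) (n : nat) (E : finType).
Variable Sigma : 'I_n -> {set {set E}}.
Variables (a0 a1 a2 : E -> R).
Hypothesis ha : forall e, 0 <= a0 e /\ 0 <= a1 e /\ 0 <= a2 e.

Local Notation lat := (latency a0 a1 a2).
Local Notation Pot := (Pot a0 a1 a2).
Implicit Types (S : profile n E) (i : 'I_n) (t : {set E}) (e : E).

Definition cnt (S : profile n E) (e : E) : nat := #|[set i | e \in S i]|.
Definition cnt' (S : profile n E) (i : 'I_n) (e : E) : nat :=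
  #|[set j | (j != i) && (e \in S j)]|.

Lemma loadE S e : load R S e = (cnt S e)%:R.
Proof. by []. Qed.

Lemma cnt_split S i e : cnt S e = (cnt' S i e + (e \in S i))%N.
Proof.
rewrite /cnt (cardsD1 i) inE addnC; congr (_ + _)%N.
by apply: eq_card => j; rewrite !inE.
Qed.

Definition Phi (S : profile n E) : R := \sum_e Pot e (cnt S e).

Lemma Phi_dec S i : Phi S = \sum_e Pot e (cnt' S i e) + cost a0 a1 a2 S i.
Proof.
rewrite /Phi /cost.
rewrite (eq_bigr (fun e => Pot e (cnt' S i e) +
   (if e \in S i then lat e (load R S e) else 0))); last first.
  move=> e _; rewrite (cnt_split S i e) loadE (cnt_split S i e).
  by case: (e \in S i); rewrite ?addn1 ?addn0 ?PotS ?addr0.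
by rewrite big_split /= -big_mkcond.
Qed.

Lemma cnt'_dev S i t e : cnt' (deviate S i t) i e = cnt' S i e.
Proof.
apply: eq_card => j; rewrite !inE ffunE.
by case: (j =P i).
Qed.

Lemma dev_i S i t : deviate S i t i = t.
Proof. by rewrite ffunE eqxx. Qed.

Lemma rosenthal S i t :
  Phi (deviate S i t) - cost a0 a1 a2 (deviate S i t) i = Phi S - cost a0 a1 a2 S i.
Proof.
rewrite (Phi_dec (deviate S i t) i) (Phi_dec S i) !addrK; apply: eq_bigr => e _; by rewrite cnt'_dev.
Qed.

Lemma cost_dev S i t :
  cost a0 a1 a2 (deviate S i t) i <= \sum_(e in t) lat e ((cnt S e)%:R + 1).
Proof.
rewrite /cost dev_i; apply: ler_sum => e he.
apply: (lat_mono ha) => //.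
rewrite loadE (cnt_split _ i) dev_i he cnt'_dev (cnt_split S i e) addn1.
rewrite -natS ler_nat ltnS; exact: leq_addr.
Qed.

Lemma sum_exchange (T : 'I_n -> {set E}) (f : E -> R) :
  \sum_i \sum_(e in T i) f e = \sum_e (#|[set i | e \in T i]|)%:R * f e.
Proof.
under eq_bigr do rewrite big_mkcond /=.
rewrite exchange_big /=; apply: eq_bigr => e _.
rewrite -big_mkcond /=.
rewrite (eq_bigl (fun i => i \in [set i | e \in T i])); last by move=> i; rewrite inE.
by rewrite sumr_const mulr_natl.
Qed.

Lemma SUME S : SUM a0 a1 a2 S = \sum_e (cnt S e)%:R * lat e (cnt S e)%:R.
Proof. by rewrite /SUM /cost sum_exchange. Qed.

End Game2.
Unset Implicit Arguments.
Theorem mainTheorem9 (R : realFieldType) (n : nat) (E : finType)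
    (Sigma : 'I_n -> {set {set E}}) (a0 a1 a2 : E -> R)
    (hSigma : forall i, Sigma i != set0)
    (ha : forall e, 0 <= a0 e /\ 0 <= a1 e /\ 0 <= a2 e) :
  exists S : profile n E,
    is_PNE Sigma a0 a1 a2 S /\
    forall S' : profile n E, valid_profile Sigma S' ->
      SUM a0 a1 a2 S <= (2362%:R / 1000%:R) * SUM a0 a1 a2 S'.
Proof.
pose validb (S : profile n E) := [forall i, S i \in Sigma i].
have validP S : reflect (valid_profile Sigma S) (validb S).
  exact: forallP.
pose S0 : profile n E := [ffun i => odflt set0 [pick t in Sigma i]].
have vS0 : validb S0.
  apply/forallP => i; rewrite ffunE.
  case: pickP => [t ht //|h].
  by have /set0Pn [t ht] := hSigma i; move: (h t); rewrite ht.
case: (arg_minP (Phi a0 a1 a2) vS0) => S /validP vS Smin.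
have Sminv : forall S', valid_profile Sigma S' -> Phi a0 a1 a2 S <= Phi a0 a1 a2 S'.
  by move=> S' /validP; apply: Smin.
have hdev : forall i t, t \in Sigma i -> valid_profile Sigma (deviate S i t).
  move=> i t ht j; rewrite ffunE; case: (j =P i) => [->//|_]; exact: vS.
have nash : forall i t, t \in Sigma i ->
    cost a0 a1 a2 S i <= cost a0 a1 a2 (deviate S i t) i.
  move=> i t ht.
  have h1 := Sminv _ (hdev i t ht).
  have h2 := rosenthal a0 a1 a2 S i t.
  lra.
exists S; split; first by split.
move=> S' vS'.
have hN : SUM a0 a1 a2 S <= \sum_e (cnt S' e)%:R * latency a0 a1 a2 e ((cnt S e)%:R + 1).
  rewrite -sum_exchange /SUM; apply: ler_sum => i _.
  apply: le_trans (nash i (S' i) (vS' i)) _.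
  exact: cost_dev.
have hP := Sminv S' vS'.
have hR : \sum_e (3276 * ((cnt S e)%:R * latency a0 a1 a2 e (cnt S e)%:R)
     + 2724 * ((cnt S' e)%:R * latency a0 a1 a2 e ((cnt S e)%:R + 1))
     + 1908 * (6 * Pot a0 a1 a2 e (cnt S' e) - 6 * Pot a0 a1 a2 e (cnt S e)))
   <= \sum_e 14172 * ((cnt S' e)%:R * latency a0 a1 a2 e (cnt S' e)%:R).
  by apply: ler_sum => e _; apply: resource.
rewrite !big_split /= -!mulr_sumr sumrB -!mulr_sumr -SUME -SUME in hR.
rewrite /Phi in hP.
lra.
Qed.
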